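(* Let $\mathcal L_{\mathcal N}=(\mathcal L,[\cdot_\lambda\cdot]_{\mathcal L},\mathcal N)$ and $\mathcal H_{\mathcal Q}=(\mathcal H,[\cdot_\lambda\cdot]_{\mathcal H},\mathcal Q)$ be Nijenhuis Lie conformal algebras, and let $\mathcal E_{\mathcal R}$ and $\mathcal E'_{\mathcal R'}$ be two equivalent non-abelian extensions of $\mathcal L_{\mathcal N}$ by $\mathcal H_{\mathcal Q}$, with sections $s$ of $\mathcal E_{\mathcal R}$ and $s'$ of $\mathcal E'_{\mathcal R'}$ respectively. Then the non-abelian $2$-cocycles $(\chi_\lambda,\rho,\Phi)$ and $(\chi'_\lambda,\rho',\Phi')$ induced by $s$ and $s'$ are equivalent.
   Context: All spaces are over $\mathbb C$. A Lie conformal algebra is a $\mathbb C[\partial]$-module with a $\mathbb C$-bilinear $\lambda$-bracket satisfying $[\partial a_\lambda b]=-\lambda[a_\lambda b]$, $[a_\lambda\partial b]=(\partial+\lambda)[a_\lambda b]$, $[a_\lambda b]=-[b_{-\partial-\lambda}a]$, $[a_\lambda[b_\mu c]]=[[a_\lambda b]_{\lambda+\mu}c]+[b_\mu[a_\lambda c]]$. A Nijenhuis operator is a $\mathbb C[\partial]$-linear $\mathcal N$ with $[\mathcal N(p)_\lambda\mathcal N(q)]=\mathcal N([\mathcal N(p)_\lambda q]+[p_\lambda\mathcal N(q)]-\mathcal N([p_\lambda q]))$; a Nijenhuis Lie conformal algebra is a Lie conformal algebra with a Nijenhuis operator; morphisms are bracket-preserving $\mathbb C[\partial]$-linear maps intertwining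 the operators. A non-abelian extension of $\mathcal L_{\mathcal N}$ by $\mathcal H_{\mathcal Q}$ is a Nijenhuis Lie conformal algebra $\mathcal E_{\mathcal R}=(\mathcal E,[\cdot_\lambda\cdot]_{\mathcal E},\mathcal R)$ with a short exact sequence $0\to\mathcal H_{\mathcal Q}\xrightarrow{inc}\mathcal E_{\mathcal R}\xrightarrow{proj}\mathcal L_{\mathcal N}\to0$ of morphisms of Nijenhuis Lie conformal algebras, split as $\mathbb C[\partial]$-modules; identify $\mathcal H$ with $inc(\mathcal H)$, so $\mathcal R|_{\mathcal H}=\mathcal Q$. Two extensions $\mathcal E_{\mathcal R},\mathcal E'_{\mathcal R'}$ are equivalent if there is a morphism of Nijenhuis Lie conformal algebras $\tau:\mathcal E_{\mathcal R}\to\mathcal E'_{\mathcal R'}$ with $\tau\circ inc=inc'$ and $proj'\circ\tau=proj$. A section is a $\mathbb C[\partial]$-linear $s$ with $proj\circ s=\mathrm{id}$; it induces $\chi_\lambda(p,q)=[s(p)_\lambda s(q)]_{\mathcal E}-s([p_\lambda q]_{\mathcal L})$, $\rho(p)_\lambda h=[s(p)_\lambda h]_{\mathcal E}$, $\Phi(p)=\mathcal R(s(p))-s(\mathcal N(p))$, all $\mathcal H$-valued. A non-abelian $2$-cocycle of $\mathcal L_{\mathcal N}$ with values in $\mathcal H_{\mathcal Q}$ is a triple of maps $\chi_\lambda:\mathcal L\otimes\mathcal L\to\mathcal H[\lambda]$, $\rho:\mathcal L\otimes\mathcal H\to\mathcal H[\lambda]$, $\Phi:\mathcal L\to\mathcal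 H$ satisfying, for all $p,q,r\in\mathcal L$, $h\in\mathcal H$: (i) $\rho(p)_\lambda\rho(q)_\mu h-\rho(q)_\mu\rho(p)_\lambda h-\rho([p_\lambda q]_{\mathcal L})_{\lambda+\mu}h=[\chi_\lambda(p,q)_{\lambda+\mu}h]_{\mathcal H}$; (ii) $\rho(p)_\lambda\chi_\mu(q,r)+\rho(q)_\mu\chi_\lambda(r,p)+\rho(r)_{-\partial-\lambda-\mu}\chi_\lambda(p,q)-\chi_{\lambda+\mu}([q_\mu r]_{\mathcal L},p)-\chi_{\lambda+\mu}([r_{-\partial-\lambda}p]_{\mathcal L},q)-\chi_{\lambda+\mu}([p_\lambda q]_{\mathcal L},r)=0$; (iii) $\rho(\mathcal N p)_\lambda\mathcal Q(h)=\mathcal Q(\rho(\mathcal N p)_\lambda h+\rho(p)_\lambda\mathcal Q(h)-\mathcal Q(\rho(p)_\lambda h))+\mathcal Q([\Phi(p)_\lambda h]_{\mathcal H})-[\Phi(p)_\lambda\mathcal Q(h)]_{\mathcal H}$; (iv) $\chi_\lambda(\mathcal Np,\mathcal Nq)-\mathcal Q(\chi_\lambda(\mathcal Np,q)+\chi_\lambda(p,\mathcal Nq)-\mathcal Q\chi_\lambda(p,q))-\Phi([\mathcal N(p)_\lambda q]_{\mathcal L}+[p_\lambda\mathcal N(q)]_{\mathcal L}-\mathcal N[p_\lambda q]_{\mathcal L})+\rho(\mathcal Np)_\lambda\Phi(q)-\rho(\mathcal Nq)_{-\partial-\lambda}\Phi(p)+\mathcal Q(\rho(q)_{-\partial-\lambda}\Phi(p)-\rho(p)_\lambda\Phi(q)+\Phi([p_\lambda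 q]_{\mathcal L}))+[\Phi(p)_\lambda\Phi(q)]_{\mathcal H}=0$. Two non-abelian $2$-cocycles $(\chi_\lambda,\rho,\Phi)$, $(\chi'_\lambda,\rho',\Phi')$ are equivalent if there is a linear map $\tau:\mathcal L\to\mathcal H$ with $\rho(p)_\lambda h-\rho'(p)_\lambda h=[\tau(p)_\lambda h]_{\mathcal H}$, $\chi_\lambda(p,q)-\chi'_\lambda(p,q)=[\tau(p)_\lambda\tau(q)]_{\mathcal H}-\tau([p_\lambda q]_{\mathcal L})+\rho'(p)_\lambda\tau(q)-\rho'(q)_{-\partial-\lambda}\tau(p)$, and $\Phi(p)-\Phi'(p)=\mathcal Q(\tau(p))-\tau(\mathcal N(p))$ for all $p,q\in\mathcal L$, $h\in\mathcal H$. *)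

(* Defs.v *)
From HB Require Import structures.
From mathcomp Require Import all_boot all_algebra.
From mathcomp Require Import complex Rstruct.

Set Implicit Arguments.
Unset Strict Implicit.
Unset Printing Implicit Defensive.
Import GRing.Theory.
Local Open Scope ring_scope.

Definition CC : numClosedFieldType := (Rdefinitions.R : rcfType)[i].

Definition lin (A B : lmodType CC) (f : A -> B) : Prop :=
  forall (k : CC) (x y : A), f (k *: x + y) = k *: f x + f y.

(* A one-variable polynomial  f(lambda) in M[lambda] is given by its list of  *)
(* coefficients  f = [:: f_0; f_1; ...]  (f = sum_n lambda^n f_n); trailing  *)
(* zeros are irrelevant since we always compare coefficientwise (nth 0).     *)
(* Polynomials in the two variables lambda, mu (and all intermediate         *)
(* expressions) are represented as formal sums of monomials: a list of       *)
(* triples ((i, j), m) standing for  lambda^i mu^j m.                        *)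
Definition tm (M : lmodType CC) := ((nat * nat) * M)%type.

Definition coef2 (M : lmodType CC) (s : seq (tm M)) (i j : nat) : M :=
  \sum_(t <- s | (t.1.1 == i) && (t.1.2 == j)) t.2.

Definition peq (M : lmodType CC) (s s' : seq (tm M)) : Prop :=
  forall i j, coef2 s i j = coef2 s' i j.

Definition tneg (M : lmodType CC) (s : seq (tm M)) : seq (tm M) :=
  [seq (t.1, - t.2) | t <- s].

Definition tmap (M N : lmodType CC) (f : M -> N) (s : seq (tm M)) : seq (tm N) :=
  [seq (t.1, f t.2) | t <- s].

Definition tmulX (M : lmodType CC) (s : seq (tm M)) : seq (tm M) :=
  [seq ((t.1.1.+1, t.1.2), t.2) | t <- s].

(* Substitution of  nu := cl*lambda + cm*mu + cd*partial  into the polynomial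
   f(nu) = sum_k nu^k f_k  in M[nu], where partial = d acts on the coefficients
   (i.e. on the result):
     f(cl lambda + cm mu + cd partial)
       = sum_k sum_{b+c+a=k} k!/(a!b!c!) cl^b cm^c cd^a lambda^b mu^c d^a(f_k). *)
Definition subst (M : lmodType CC) (d : M -> M) (f : seq M) (cl cm cd : CC)
  : seq (tm M) :=
  flatten [seq flatten [seq
      [seq ((b, c),
            (('C(k, b) * 'C(k - b, c))%N%:R * cl ^+ b * cm ^+ c * cd ^+ (k - b - c))
              *: iter (k - b - c)%N d (nth 0 f k))
      | c <- iota 0 (k - b).+1]
    | b <- iota 0 k.+1]
  | k <- iota 0 (size f)].

Definition Pl (M : lmodType CC) (d : M -> M) (f : seq M) := subst d f 1 0 0.
Definition Pm (M : lmodType CC) (d : M -> M) (f : seq M) := subst d f 0 1 0.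

Definition bind (M N : lmodType CC) (s : seq (tm M)) (F : M -> seq (tm N))
  : seq (tm N) :=
  flatten [seq [seq ((t.1.1 + u.1.1, t.1.2 + u.1.2)%N, u.2) | u <- F t.2] | t <- s].

(* A C[partial]-module is a C-vector space with a C-linear endomorphism dd. *)
(* The lambda-bracket [a_lambda b] is  br a b  (coefficient list in lambda).*)
Record NLCA := MkNLCA {
  car :> lmodType CC;
  dd : car -> car;
  dd_lin : lin dd;
  br : car -> car -> seq car;
  br_linl : forall (k : CC) a b c n,
    nth 0 (br (k *: a + b) c) n = k *: nth 0 (br a c) n + nth 0 (br b c) n;
  br_linr : forall (k : CC) a b c n,
    nth 0 (br c (k *: a + b)) n = k *: nth 0 (br c a) n + nth 0 (br c b) n;
  br_dl : forall a b,
    peq (Pl dd (br (dd a) b)) (tneg (tmulX (Pl dd (br a b))));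
  br_dr : forall a b,
    peq (Pl dd (br a (dd b))) (tmap dd (Pl dd (br a b)) ++ tmulX (Pl dd (br a b)));
  (* [a_lambda b] = - [b_{-partial-lambda} a] *)
  br_skew : forall a b,
    peq (Pl dd (br a b)) (tneg (subst dd (br b a) (-1) 0 (-1)));
  (* [a_lambda [b_mu c]] = [[a_lambda b]_{lambda+mu} c] + [b_mu [a_lambda c]] *)
  br_jacobi : forall a b c,
    peq (bind (Pm dd (br b c)) (fun x => Pl dd (br a x)))
        (bind (Pl dd (br a b)) (fun x => subst dd (br x c) 1 1 0)
         ++ bind (Pl dd (br a c)) (fun x => Pm dd (br b x)));
  nij : car -> car;
  nij_lin : lin nij;
  nij_dd : forall x, nij (dd x) = dd (nij x);
  nij_cond : forall p q,
    peq (Pl dd (br (nij p) (nij q)))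
        (tmap nij (Pl dd (br (nij p) q) ++ Pl dd (br p (nij q))
                   ++ tneg (tmap nij (Pl dd (br p q)))))
}.

Definition cdlin (A B : NLCA) (f : A -> B) : Prop :=
  lin f /\ (forall x, f (dd x) = dd (f x)).

Definition nhom (A B : NLCA) (f : A -> B) : Prop :=
  cdlin f
  /\ (forall a b n, f (nth 0 (br a b) n) = nth 0 (br (f a) (f b)) n)
  /\ (forall x, f (nij x) = nij (f x)).

Definition is_section (L E : NLCA) (proj : E -> L) (s : L -> E) : Prop :=
  cdlin s /\ (forall p, proj (s p) = p).

Definition is_ext (L H E : NLCA) (inc : H -> E) (proj : E -> L) : Prop :=
  nhom inc /\ nhom proj
  /\ injective inc
  /\ (forall p : L, exists e : E, proj e = p)
  /\ (forall e : E, proj e = 0 <-> exists h : H, inc h = e)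
  /\ (exists s : L -> E, is_section proj s).

Definition ext_equiv (L H E E' : NLCA) (inc : H -> E) (proj : E -> L)
    (inc' : H -> E') (proj' : E' -> L) : Prop :=
  exists t : E -> E',
    nhom t /\ (forall h, t (inc h) = inc' h) /\ (forall e, proj' (t e) = proj e).

(* (chi, rho, Phi) is the triple induced by the section s (with H identified
   with inc(H), i.e. the H-valued maps are characterised through inc, which is
   injective):
     chi_lambda(p,q) = [s p_lambda s q]_E - s [p_lambda q]_L,
     rho(p)_lambda h = [s p_lambda h]_E,
     Phi(p) = R (s p) - s (N p). *)
Definition induced (L H E : NLCA) (inc : H -> E) (s : L -> E)
    (chi : L -> L -> seq H) (rho : L -> H -> seq H) (Phi : L -> H) : Prop :=
  (forall p q n, inc (nth 0 (chi p q) n)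
                 = nth 0 (br (s p) (s q)) n - s (nth 0 (br p q) n))
  /\ (forall p h n, inc (nth 0 (rho p h) n) = nth 0 (br (s p) (inc h)) n)
  /\ (forall p, inc (Phi p) = nij (s p) - s (nij p)).

Definition cocycle_equiv (L H : NLCA)
    (chi : L -> L -> seq H) (rho : L -> H -> seq H) (Phi : L -> H)
    (chi' : L -> L -> seq H) (rho' : L -> H -> seq H) (Phi' : L -> H) : Prop :=
  exists tau : L -> H,
    cdlin tau
    /\ (forall p h n, nth 0 (rho p h) n - nth 0 (rho' p h) n = nth 0 (br (tau p) h) n)
    (* chi - chi' = [tau p_lambda tau q] - tau [p_lambda q]
                    + rho'(p)_lambda tau q - rho'(q)_{-partial-lambda} tau p *)
    /\ (forall p q : L,
          peq (Pl (@dd H) (chi p q) ++ tneg (Pl (@dd H) (chi' p q)))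
              (Pl (@dd H) (br (tau p) (tau q))
               ++ tneg (tmap tau (Pl (@dd L) (br p q)))
               ++ Pl (@dd H) (rho' p (tau q))
               ++ tneg (subst (@dd H) (rho' q (tau p)) (-1) 0 (-1))))
    /\ (forall p, Phi p - Phi' p = nij (tau p) - tau (nij p)).

(* Main.v *)
Require Import Defs.
From HB Require Import structures.
From mathcomp Require Import all_boot all_algebra.
From mathcomp Require Import complex Rstruct.
Local Open Scope ring_scope.
Import GRing.Theory.
Set Implicit Arguments.
Unset Strict Implicit.

Section Aux.
Variable M : lmodType CC.

Definition idx (cl cm cd : CC) (k : nat) : seq ((nat * nat) * (CC * nat)) :=
  flatten [seq [seq ((b, c),
            ((('C(k, b) * 'C(k - b, c))%N%:R * cl ^+ b * cm ^+ c * cd ^+ (k - b - c)),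
              (k - b - c)%N))
      | c <- iota 0 (k - b).+1] | b <- iota 0 k.+1].

Definition blk (d : M -> M) cl cm cd k (x : M) : seq (tm M) :=
  [seq (t.1, t.2.1 *: iter t.2.2 d x) | t <- idx cl cm cd k].

Lemma subst_blk d f cl cm cd :
  subst d f cl cm cd = flatten [seq blk d cl cm cd k (nth 0 f k) | k <- iota 0 (size f)].
Proof.
rewrite /subst; congr flatten; apply: eq_map => k.
rewrite /blk /idx map_flatten -map_comp; congr flatten; apply: eq_map => b /=.
by rewrite -map_comp.
Qed.

Definition G d cl cm cd i j k (x : M) : M := coef2 (blk d cl cm cd k x) i j.

Lemma coef2_flatten (T : Type) (F : T -> seq (tm M)) (s : seq T) i j :
  coef2 (flatten [seq F x | x <- s]) i j = \sum_(x <- s) coef2 (F x) i j.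
Proof. by rewrite /coef2 big_flatten big_map. Qed.

Lemma coef2_cat (s t : seq (tm M)) i j : coef2 (s ++ t) i j = coef2 s i j + coef2 t i j.
Proof. by rewrite /coef2 big_cat. Qed.

Lemma coef2_tneg (s : seq (tm M)) i j : coef2 (tneg s) i j = - coef2 s i j.
Proof. by rewrite /coef2 /tneg big_map sumrN. Qed.

Lemma G_E d cl cm cd i j k x :
  G d cl cm cd i j k x =
  \sum_(t <- idx cl cm cd k | (t.1.1 == i) && (t.1.2 == j)) t.2.1 *: iter t.2.2 d x.
Proof. by rewrite /G /coef2 /blk big_map. Qed.

End Aux.
Section Lin.
Variables A B : lmodType CC.
Variable f : A -> B.
Hypothesis Hf : lin f.
Lemma lin0 : f 0 = 0.
Proof.
have := Hf 1 0 0; rewrite scale1r addr0 scale1r => e.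
by apply: (addrI (f 0)); rewrite addr0 -e.
Qed.
Lemma linD x y : f (x + y) = f x + f y.
Proof. by rewrite -{1}(scale1r x) Hf scale1r. Qed.
Lemma linZ k x : f (k *: x) = k *: f x.
Proof. by rewrite -[k *: x]addr0 Hf lin0 addr0. Qed.
Lemma linN x : f (- x) = - f x.
Proof. by rewrite -scaleN1r linZ scaleN1r. Qed.
Lemma linB x y : f (x - y) = f x - f y.
Proof. by rewrite linD linN. Qed.
Lemma lin_sum (I : Type) (r : seq I) (P : pred I) (F : I -> A) :
  f (\sum_(i <- r | P i) F i) = \sum_(i <- r | P i) f (F i).
Proof. exact: (big_morph f linD lin0). Qed.
End Lin.

Lemma lin_iter (A : lmodType CC) (d : A -> A) n : lin d -> lin (iter n d).
Proof.
move=> Hd k x y; elim: n => [//|n IH] /=.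
by rewrite IH Hd.
Qed.

Lemma lin_comp (A B C : lmodType CC) (f : A -> B) (g : B -> C) :
  lin f -> lin g -> lin (fun x => g (f x)).
Proof. by move=> Hf Hg k x y; rewrite Hf Hg. Qed.

Lemma iter_comm (A B : lmodType CC) (f : A -> B) d d' n x :
  (forall x, f (d x) = d' (f x)) -> f (iter n d x) = iter n d' (f x).
Proof. by move=> H; elim: n => [//|n IH] /=; rewrite H IH. Qed.

Section GS.
Variable M : lmodType CC.
Variable d : M -> M.
Hypothesis Hd : lin d.

Lemma G_lin cl cm cd i j k : lin (G d cl cm cd i j k).
Proof.
move=> a x y; rewrite !G_E scaler_sumr -big_split; apply: eq_bigr => t _.
by rewrite (lin_iter _ Hd) scalerDr !scalerA mulrC.
Qed.

Lemma G0 cl cm cd i j k : G d cl cm cd i j k 0 = 0.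
Proof. exact: lin0 (G_lin _ _ _ _ _ _). Qed.

Definition S cl cm cd i j N (F : nat -> M) := \sum_(k < N) G d cl cm cd i j k (F k).

Lemma coef2_subst f cl cm cd i j N : (size f <= N)%N ->
  coef2 (subst d f cl cm cd) i j = S cl cm cd i j N (nth 0 f).
Proof.
move=> HN; rewrite subst_blk coef2_flatten /S -(big_mkord xpredT (fun k => G d cl cm cd i j k (nth 0 f k))).
rewrite (@big_cat_nat _ _ _ (size f) 0 N) /= ?leq0n //.
rewrite [X in _ = _ + X](_ : _ = 0) ?addr0.
  by rewrite /index_iota subn0.
rewrite big_nat big1 // => k /andP[hk _]; by rewrite nth_default // G0.
Qed.

Lemma S_add cl cm cd i j N F F' :
  S cl cm cd i j N (fun k => F k + F' k) = S cl cm cd i j N F + S cl cm cd i j N F'.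
Proof. by rewrite /S -big_split; apply: eq_bigr => k _; rewrite (linD (G_lin _ _ _ _ _ _)). Qed.

Lemma S_opp cl cm cd i j N F :
  S cl cm cd i j N (fun k => - F k) = - S cl cm cd i j N F.
Proof. by rewrite /S -sumrN; apply: eq_bigr => k _; rewrite (linN (G_lin _ _ _ _ _ _)). Qed.

Lemma S_ext cl cm cd i j N F F' : (forall k, F k = F' k) ->
  S cl cm cd i j N F = S cl cm cd i j N F'.
Proof. by move=> H; rewrite /S; apply: eq_bigr => k _; rewrite H. Qed.
End GS.

Lemma G_morph (M M' : lmodType CC) (d : M -> M) (d' : M' -> M') (phi : M -> M') :
  lin phi -> (forall x, phi (d x) = d' (phi x)) ->
  forall cl cm cd i j k x, phi (G d cl cm cd i j k x) = G d' cl cm cd i j k (phi x).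
Proof.
move=> Hp Hc cl cm cd i j k x; rewrite !G_E (lin_sum Hp); apply: eq_bigr => t _.
by rewrite (linZ Hp) (iter_comm _ _ Hc).
Qed.

Lemma S_morph (M M' : lmodType CC) (d : M -> M) (d' : M' -> M') (phi : M -> M') :
  lin phi -> (forall x, phi (d x) = d' (phi x)) ->
  forall cl cm cd i j N F, phi (S d cl cm cd i j N F) = S d' cl cm cd i j N (fun k => phi (F k)).
Proof.
move=> Hp Hc cl cm cd i j N F; rewrite /S (lin_sum Hp); apply: eq_bigr => k _.
exact: G_morph.
Qed.

Lemma coef2_tmap (M M' : lmodType CC) (phi : M -> M') s i j :
  lin phi -> coef2 (tmap phi s) i j = phi (coef2 s i j).
Proof. by move=> Hp; rewrite /coef2 /tmap big_map (lin_sum Hp). Qed.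
Lemma ab1 (V : zmodType) (a b c e : V) : (a + b - (c + e)) - (a - c) = b - e.
Proof. by rewrite opprD addrACA [_ + (b - e)]addrC addrK. Qed.
Lemma ab2 (T : zmodType) (X Y W Z U V : T) :
  (X + Y + (W + Z)) - (U + V) - (X - U) = Z - V + Y + W.
Proof.
rewrite -(addrA X) opprD addrACA [_ + (_ - V)]addrC addrK.
rewrite (addrAC Z (-V) Y) (addrAC (Z+Y) (-V) W); congr (_ - V).
by rewrite (addrC W Z) addrA (addrC Y Z).
Qed.

Lemma brDl (A : NLCA) (a b c : A) n :
  nth 0 (br (a + b) c) n = nth 0 (br a c) n + nth 0 (br b c) n.
Proof. by rewrite -{1}(scale1r a) br_linl scale1r. Qed.
Lemma brDr (A : NLCA) (a b c : A) n :
  nth 0 (br c (a + b)) n = nth 0 (br c a) n + nth 0 (br c b) n.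
Proof. by rewrite -{1}(scale1r a) br_linr scale1r. Qed.

From Stdlib Require Import ClassicalEpsilon.
From mathcomp Require Import zify.

Theorem theorem5p7 (L H E E' : NLCA)
    (inc : H -> E) (proj : E -> L) (inc' : H -> E') (proj' : E' -> L)
    (s : L -> E) (s' : L -> E')
    (chi : L -> L -> seq H) (rho : L -> H -> seq H) (Phi : L -> H)
    (chi' : L -> L -> seq H) (rho' : L -> H -> seq H) (Phi' : L -> H) :
  is_ext inc proj ->
  is_ext inc' proj' ->
  ext_equiv inc proj inc' proj' ->
  is_section proj s ->
  is_section proj' s' ->
  induced inc s chi rho Phi ->
  induced inc' s' chi' rho' Phi' ->
  cocycle_equiv chi rho Phi chi' rho' Phi'.
Proof.
move=> [Hinc [Hproj [Iinj [_ [Hker _]]]]] [[[iL idd] [ibr inij]] [[[pL pdd] _] [Iinj' [_ [Hker' _]]]]].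
move=> [t [[[tL tdd] [tbr tnij]] [Htinc Htproj]]] [[sL sdd] Hs] [[s'L s'dd] Hs'].
move=> [Ichi [Irho IPhi]] [Ichi' [Irho' IPhi']].
have Hex : forall p, exists h, inc' h = t (s p) - s' p.
  move=> p; apply/Hker'; rewrite (linB pL) Htproj Hs Hs'; exact: subrr.
have [tau Htau] : exists tau : L -> H, forall p, inc' (tau p) = t (s p) - s' p.
  exists (fun p => proj1_sig (constructive_indefinite_description _ (Hex p))) => p.
  exact: (proj2_sig (constructive_indefinite_description _ (Hex p))).
have Hts : forall p, t (s p) = s' p + inc' (tau p) by move=> p; rewrite Htau addrC subrK.
have tauL : lin tau.
  move=> k x y; apply: Iinj'; rewrite iL !Htau sL tL s'L.
  by rewrite scalerBr opprD addrACA.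
have taudd : forall x, tau (dd x) = dd (tau x).
  by move=> x; apply: Iinj'; rewrite idd !Htau sdd tdd s'dd (linB (@dd_lin E')).
exists tau; split; first by split.
split.
  move=> p h n; apply: Iinj'; rewrite (linB iL) -[inc' (nth 0 (rho p h) n)]Htinc.
  rewrite Irho tbr Hts Htinc brDl Irho' -ibr.
  by rewrite addrAC subrr add0r.
split; last first.
  move=> p; apply: Iinj'; rewrite !(linB iL) -[inc' (Phi p)]Htinc IPhi (linB tL) tnij.
  rewrite !Hts IPhi' (linD (@nij_lin E')) inij.
  exact: ab1.
move=> p q i j; apply: Iinj'.
set a := inc' (tau p); set b := s' q.
set N := (size (chi p q) + size (chi' p q) + size (br (tau p) (tau q)) + size (br p q)
  + size (rho' p (tau q)) + size (rho' q (tau p)) + size (br a b) + size (br b a))%N.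
have HdH := @dd_lin H; have HdE := @dd_lin E'; have HdL := @dd_lin L.
have itL : lin (fun x => inc' (tau x)) := lin_comp tauL iL.
have itdd : forall x, inc' (tau (dd x)) = dd (inc' (tau x)) by move=> x; rewrite taudd idd.
have e1 : forall f : seq H, (size f <= N)%N -> forall cl cm cd : CC,
    inc' (coef2 (subst (@dd H) f cl cm cd) i j) = S (@dd E') cl cm cd i j N (fun k => inc' (nth 0 f k)).
  by move=> f hf cl cm cd; rewrite (@coef2_subst _ _ HdH _ _ _ _ _ _ N) // (S_morph iL idd).
have e4 : inc' (coef2 (tmap tau (Pl (@dd L) (br p q))) i j)
          = S (@dd E') 1 0 0 i j N (fun k => inc' (tau (nth 0 (br p q) k))).
  by rewrite (coef2_tmap _ _ _ tauL) /Pl (@coef2_subst _ _ HdL _ _ _ _ _ _ N) ?(S_morph itL itdd) //; lia.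
have e7 : S (@dd E') 1 0 0 i j N (nth 0 (br a b))
          = - S (@dd E') (-1) 0 (-1) i j N (fun k => inc' (nth 0 (rho' q (tau p)) k)).
  have := br_skew a b i j; rewrite coef2_tneg /Pl !(@coef2_subst _ _ HdE _ _ _ _ _ _ N) //; try lia.
  by move=> ->; congr (- _); apply: S_ext => k; rewrite Irho'.
have e8 : forall k, inc' (nth 0 (chi p q) k) - inc' (nth 0 (chi' p q) k)
   = inc' (nth 0 (br (tau p) (tau q)) k) - inc' (tau (nth 0 (br p q) k))
     + inc' (nth 0 (rho' p (tau q)) k) + nth 0 (br a b) k.
  move=> k; rewrite -[inc' (nth 0 (chi p q) k)]Htinc Ichi (linB tL) tbr !Hts Ichi'.
  rewrite Irho' ibr brDl !brDr.
  exact: ab2.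
rewrite !coef2_cat !coef2_tneg !(linD iL) !(linN iL) e4 /Pl !e1; try lia.
rewrite -e7 -!(S_opp HdE) -!(S_add HdE).
apply: S_ext => k.
by rewrite e8 !addrA.
Qed.
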